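(* Let $\varepsilon_{\mathrm{opt}}<\epsilon$ and $b'=b-\frac{\epsilon-\varepsilon_{\mathrm{opt}}}{2}$. Let $\bar\pi$ be a policy with $\hat V^{\bar\pi}_{r_p}(\rho)\ge\hat V^{\hat\pi^*}_{r_p}(\rho)-\varepsilon_{\mathrm{opt}}$ and $\hat V^{\bar\pi}_c(\rho)\ge b'-\varepsilon_{\mathrm{opt}}$ (e.g. the output $\bar\pi_T$ of the primal-dual algorithm under the conditions of its guarantee). Suppose $$|V^{\bar\pi}_c(\rho)-\hat V^{\bar\pi}_c(\rho)|\le\tfrac{\epsilon-\varepsilon_{\mathrm{opt}}}{2},\quad|V^{\pi^*}_c(\rho)-\hat V^{\pi^*}_c(\rho)|\le\tfrac{\epsilon-\varepsilon_{\mathrm{opt}}}{2},\quad|\hat V^{\pi^*_c}_c(\rho)-V^{\pi^*_c}_c(\rho)|\le\tfrac{\zeta}{4}.$$ Then (a) $V^{\bar\pi}_c(\rho)\ge b-\epsilon$, and (b) $$V^{\pi^*}_r(\rho)-V^{\bar\pi}_r(\rho)\le\frac{2\omega}{1-\gamma}+\varepsilon_{\mathrm{opt}}+|V^{\pi^*}_{r_p}(\rho)-\hat V^{\pi^*}_{r_p}(\rho)|+|\hat V^{\bar\pi}_{r_p}(\rho)-V^{\bar\pi}_{r_p}(\rho)|.$$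
   Context: A discounted CMDP $M=\langle\mathcal S,\mathcal A,\mathcal P,r,c,b,\rho,\gamma\rangle$ with finite state and action sets, reward $r:\mathcal S\times\mathcal A\to[0,1]$, constraint reward $c:\mathcal S\times\mathcal A\to[0,1]$, threshold $b$, initial distribution $\rho$, discount $\gamma\in[0,1)$. $V^\pi_g(\rho)$ is the discounted value of policy $\pi$ for reward $g$ under $\mathcal P$, $s_0\sim\rho$; hats denote values under an empirical kernel $\hat{\mathcal P}$. $r_p=r+\xi$ with $\xi(s,a)\in[0,\omega]$. $\pi^*$ is an optimal policy of $\max_\pi V^\pi_r(\rho)$ s.t. $V^\pi_c(\rho)\ge b$; $\hat\pi^*$ is an optimal policy of $\max_\pi\hat V^\pi_{r_p}(\rho)$ s.t. $\hat V^\pi_c(\rho)\ge b'$. Slater constant $\zeta=\max_\pi V^\pi_c(\rho)-b$; $\pi^*_c\in\arg\max_\pi V^\pi_c(\rho)$. *)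

(* Defs.v *)
From HB Require Import structures.
From mathcomp Require Import all_boot all_order all_algebra.
From mathcomp Require Import all_classical all_reals all_analysis.
Set Implicit Arguments. Unset Strict Implicit. Unset Printing Implicit Defensive.
Import Order.TTheory GRing.Theory Num.Theory numFieldNormedType.Exports.
Local Open Scope ring_scope.

Section CMDP.
Variables (R : realType) (S A : finType).

Definition is_dist (T : finType) (p : T -> R) : Prop :=
  (forall x, 0 <= p x) /\ \sum_(x : T) p x = 1.

(* a transition kernel: P s a s' = Pr(s' | s, a) *)
Definition is_kernel (P : S -> A -> S -> R) : Prop :=
  forall s a, is_dist (P s a).

(* a (stationary, possibly randomized) policy: pi s a = pi(a | s) *)
Definition is_policy (pi : S -> A -> R) : Prop :=
  forall s, is_dist (pi s).

(* distribution of s_t when s_0 ~ rho, a_t ~ pi(.|s_t), s_{t+1} ~ P(.|s_t,a_t) *)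
Fixpoint state_dist (P : S -> A -> S -> R) (pi : S -> A -> R) (rho : S -> R)
  (t : nat) : S -> R :=
  match t with
  | 0%N => rho
  | t'.+1 => fun s' => \sum_(s : S) \sum_(a : A)
      state_dist P pi rho t' s * pi s a * P s a s'
  end.

Definition exp_reward (P : S -> A -> S -> R) (pi : S -> A -> R) (rho : S -> R)
  (g : S -> A -> R) (t : nat) : R :=
  \sum_(s : S) \sum_(a : A) state_dist P pi rho t s * pi s a * g s a.

Definition value (P : S -> A -> S -> R) (gamma : R) (pi : S -> A -> R)
  (g : S -> A -> R) (rho : S -> R) : R :=
  limn (series (fun t => gamma ^+ t * exp_reward P pi rho g t)).

End CMDP.

(* Main.v *)
Require Import Defs.
From HB Require Import structures.
From mathcomp Require Import all_boot all_order all_algebra.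
From mathcomp Require Import all_classical all_reals all_analysis.
Import Order.TTheory GRing.Theory Num.Theory numFieldNormedType.Exports.
From mathcomp Require Import lra.
Local Open Scope ring_scope.
Section H.
Variables (R : realType) (S A : finType).
Variables (P : S -> A -> S -> R) (pi : S -> A -> R) (rho : S -> R) (gamma : R).
Hypothesis (HP : is_kernel P) (Hpi : is_policy pi) (Hrho : is_dist rho).
Hypothesis (Hg : 0 <= gamma < 1).

Lemma sd_dist t : is_dist (state_dist P pi rho t).
Proof.
elim: t => [|t [IH0 IH1]] //=; split.
- move=> s'; apply: sumr_ge0 => s _; apply: sumr_ge0 => a _.
  by rewrite !mulr_ge0 //; [case: (Hpi s) | case: (HP s a)].
- rewrite exchange_big /=.
  rewrite -IH1; apply: eq_bigr => s _.
  rewrite exchange_big /=.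
  transitivity (\sum_(a : A) state_dist P pi rho t s * pi s a).
    apply: eq_bigr => a _; rewrite -mulr_sumr.
    by case: (HP s a) => _ ->; rewrite mulr1.
  by rewrite -mulr_sumr; case: (Hpi s) => _ ->; rewrite mulr1.
Qed.

Lemma er_bounds (g : S -> A -> R) M t : (forall s a, 0 <= g s a <= M) ->
  0 <= exp_reward P pi rho g t <= M.
Proof.
move=> Hgb; case: (sd_dist t) => D0 D1.
have w0 : forall s a, 0 <= state_dist P pi rho t s * pi s a.
  by move=> s a; rewrite mulr_ge0 //; case: (Hpi s).
apply/andP; split.
  apply: sumr_ge0 => s _; apply: sumr_ge0 => a _.
  by rewrite mulr_ge0 //; case/andP: (Hgb s a).
apply: (@le_trans _ _ (\sum_s \sum_a state_dist P pi rho t s * pi s a * M)).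
  apply: ler_sum => s _; apply: ler_sum => a _.
  by apply: ler_wpM2l => //; case/andP: (Hgb s a).
rewrite -[leRHS]mul1r -D1 mulr_suml; apply: ler_sum => s _.
by rewrite -mulr_suml -mulr_sumr; case: (Hpi s) => _ ->; rewrite mulr1.
Qed.

Lemma er_add (g h : S -> A -> R) t :
  exp_reward P pi rho (fun s a => g s a + h s a) t =
  exp_reward P pi rho g t + exp_reward P pi rho h t.
Proof.
rewrite /exp_reward -big_split; apply: eq_bigr => s _.
by rewrite -big_split; apply: eq_bigr => a _; rewrite mulrDr.
Qed.

Let u g := fun t => gamma ^+ t * exp_reward P pi rho g t.

Lemma val_cvg (g : S -> A -> R) M : (forall s a, 0 <= g s a <= M) ->
  cvgn (series (u g)) /\ 0 <= value P gamma pi g rho <= M / (1 - gamma).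
Proof.
move=> Hgb; case/andP: Hg => g0 g1.
have ng : `|gamma| < 1 by rewrite ger0_norm.
have u0 : forall n, 0 <= u g n.
  by move=> n; rewrite mulr_ge0 ?exprn_ge0 //; case/andP: (@er_bounds g M n Hgb).
have M0 : 0 <= M by case/andP: (@er_bounds g M 0%N Hgb) => a b; exact: le_trans a b.
have ule : forall n, u g n <= geometric M gamma n.
  move=> n; rewrite /u /= mulrC; apply: ler_wpM2r; first exact: exprn_ge0.
  by case/andP: (@er_bounds g M n Hgb).
have gc := @is_cvg_geometric_series R M gamma ng.
have uc : cvgn (series (u g)).
  apply: series_le_cvg ule gc => // n; rewrite /= mulr_ge0 ?exprn_ge0 //.
split => //; apply/andP; split.
  apply: limr_ge => //; apply: nearW => n; rewrite /series /=.
  by apply: sumr_ge0 => k _; exact: u0.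
rewrite -(cvg_lim _ (@cvg_geometric_series R M gamma ng)) //.
apply: ler_lim => //; apply: nearW => n; rewrite /series /=.
by apply: ler_sum => k _; exact: ule.
Qed.

Lemma val_add (g h : S -> A -> R) M N : (forall s a, 0 <= g s a <= M) ->
  (forall s a, 0 <= h s a <= N) ->
  value P gamma pi (fun s a => g s a + h s a) rho =
  value P gamma pi g rho + value P gamma pi h rho.
Proof.
move=> Hgb Hhb; case: (@val_cvg g M Hgb) => cg _; case: (@val_cvg h N Hhb) => ch _.
rewrite /value -lim_seriesD //; congr (limn (series _)).
by apply/funext => t; rewrite /= er_add mulrDr.
Qed.
End H.

Theorem mainTheorem8 (R : realType) (S A : finType)
  (P Phat : S -> A -> S -> R) (r c xi : S -> A -> R) (b : R) (rho : S -> R)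
  (gamma omega eps eps_opt b' zeta : R)
  (pistar pihatstar pistarc pibar : S -> A -> R) :
  is_kernel P -> is_kernel Phat -> is_dist rho ->
  (forall s a, 0 <= r s a <= 1) -> (forall s a, 0 <= c s a <= 1) ->
  (forall s a, 0 <= xi s a <= omega) ->
  0 <= gamma < 1 ->
  let rp := fun s a => r s a + xi s a in
  let V := value P gamma in
  let Vh := value Phat gamma in
  (* pi^* : optimal policy of the true CMDP with threshold b *)
  is_policy pistar -> V pistar c rho >= b ->
  (forall pi, is_policy pi -> V pi c rho >= b -> V pi r rho <= V pistar r rho) ->
  (* pihat^* : optimal policy of the empirical CMDP with reward r_p and threshold b' *)
  is_policy pihatstar -> Vh pihatstar c rho >= b' ->
  (forall pi, is_policy pi -> Vh pi c rho >= b' -> Vh pi rp rho <= Vh pihatstar rp rho) ->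
  (* pi^*_c maximizes V_c, and zeta is the Slater constant *)
  is_policy pistarc -> (forall pi, is_policy pi -> V pi c rho <= V pistarc c rho) ->
  zeta = V pistarc c rho - b ->
  eps_opt < eps ->
  b' = b - (eps - eps_opt) / 2 ->
  is_policy pibar ->
  Vh pibar rp rho >= Vh pihatstar rp rho - eps_opt ->
  Vh pibar c rho >= b' - eps_opt ->
  `|V pibar c rho - Vh pibar c rho| <= (eps - eps_opt) / 2 ->
  `|V pistar c rho - Vh pistar c rho| <= (eps - eps_opt) / 2 ->
  `|Vh pistarc c rho - V pistarc c rho| <= zeta / 4 ->
  V pibar c rho >= b - eps /\
  V pistar r rho - V pibar r rho <=
    2 * omega / (1 - gamma) + eps_opt
    + `|V pistar rp rho - Vh pistar rp rho|
    + `|Vh pibar rp rho - V pibar rp rho|.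
Proof.
move=> HP HPh Hrho Hr Hc Hxi Hg rp V Vh Hps Hpsc Hpsopt Hph Hphc Hphopt Hpc Hpcopt
  Hzeta Heps Hb' Hpb Hpb1 Hpb2 A1 A2 A3.
have rb : forall s a, 0 <= r s a <= 1 by [].
have xb : forall s a, 0 <= xi s a <= omega by [].
have rpb : forall s a, 0 <= rp s a <= 1 + omega.
  move=> s a; case/andP: (Hr s a) => r0 r1; case/andP: (Hxi s a) => x0 x1.
  by rewrite /rp; apply/andP; split; [rewrite addr_ge0 | rewrite lerD].
have E1 : V pistar rp rho = V pistar r rho + V pistar xi rho.
  exact: (@val_add R S A P pistar rho gamma HP Hps Hrho Hg r xi 1 omega rb xb).
have E2 : V pibar rp rho = V pibar r rho + V pibar xi rho.
  exact: (@val_add R S A P pibar rho gamma HP Hpb Hrho Hg r xi 1 omega rb xb).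
case: (@val_cvg R S A P pistar rho gamma HP Hps Hrho Hg xi omega xb) => _ /andP[X1 X2].
case: (@val_cvg R S A P pibar rho gamma HP Hpb Hrho Hg xi omega xb) => _ /andP[X3 X4].
move: A1 A2; rewrite !ler_norml => /andP[A1a A1b] /andP[A2a A2b].
have Hb'2 : Vh pistar c rho >= b'.
  rewrite Hb'; rewrite -/(V pistar c rho) in A2a A2b Hpsc *.
  lra.
have O1 := Hphopt _ Hps Hb'2.
have N1 := ler_norm (V pistar rp rho - Vh pistar rp rho).
have N2 := ler_norm (Vh pibar rp rho - V pibar rp rho).
split.
  rewrite Hb' in Hpb2.
  have e : (eps - eps_opt) / 2 = (eps - eps_opt) * 2^-1 by [].
  lra.
have e2 : 2 * omega / (1 - gamma) = 2 * (omega / (1 - gamma)) by rewrite mulrA.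
rewrite e2.
move: E1 E2 X1 X2 X3 X4 N1 N2 O1 Hpb1.
rewrite /V /Vh.
move: (omega / (1 - gamma)) => K.
move: (value P gamma pistar rp rho) => a1.
move: (value P gamma pistar r rho) => a2.
move: (value P gamma pistar xi rho) => a3.
move: (value P gamma pibar rp rho) => a4.
move: (value P gamma pibar r rho) => a5.
move: (value P gamma pibar xi rho) => a6.
move: (value Phat gamma pistar rp rho) => a7.
move: (value Phat gamma pibar rp rho) => a8.
move: (value Phat gamma pihatstar rp rho) => a9.
move: `|a1 - a7| => n1.
move: `|a8 - a4| => n2.
clear.
move=> *; lra.
Qed.
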